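(* Let $\boldsymbol{S}$ be a $p\times p$ symmetric positive semidefinite matrix that is nonsingular, let $\rho>0$, $k$ an integer with $0\le k\le\binom p2$, $\mathcal{C}=\{\boldsymbol{A}\in\mathbb{R}^{p\times p}:\boldsymbol{A}=\boldsymbol{A}^T,\ \|\boldsymbol{A}\|_0\le 2k+p\}$, and for positive definite $\boldsymbol{\Sigma}$ let $h_\rho(\boldsymbol{\Sigma})=\ln\det\boldsymbol{\Sigma}+\mathrm{tr}(\boldsymbol{\Sigma}^{-1}\boldsymbol{S})+\frac\rho2\mathrm{dist}(\boldsymbol{\Sigma},\mathcal{C})^2$. Then $h_\rho$ is coercive on the positive definite cone: $h_\rho(\boldsymbol{\Sigma})\to\infty$ whenever $\boldsymbol{\Sigma}$ ranges over positive definite matrices with $\|\boldsymbol{\Sigma}\|\to\infty$ or $\|\boldsymbol{\Sigma}^{-1}\|\to\infty$.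
   Context: $\|\boldsymbol{A}\|_0$ is the number of nonzero entries of $\boldsymbol{A}$; $\mathrm{dist}$ is Frobenius distance to the set $\mathcal{C}$. *)

(* Defs.v *)
From HB Require Import structures.
From mathcomp Require Import all_boot all_order all_algebra.
From mathcomp Require Import all_classical all_reals.
From mathcomp Require Import exp.
Set Implicit Arguments. Unset Strict Implicit. Unset Printing Implicit Defensive.
Import Order.TTheory GRing.Theory Num.Theory.
Local Open Scope ring_scope.
Local Open Scope classical_set_scope.

Section Defs.
Variable R : realType.
Variable p : nat.

Definition posdef (A : 'M[R]_p) : Prop :=
  A^T = A /\ forall x : 'cV[R]_p, x != 0 -> 0 < (x^T *m A *m x) 0 0.

Definition possemidef (A : 'M[R]_p) : Prop :=
  A^T = A /\ forall x : 'cV[R]_p, 0 <= (x^T *m A *m x) 0 0.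

Definition frob (A : 'M[R]_p) : R :=
  Num.sqrt (\sum_(i < p) \sum_(j < p) A i j ^+ 2).

Definition nnz (A : 'M[R]_p) : nat :=
  #|[set ij : 'I_p * 'I_p | A ij.1 ij.2 != 0]|.

Definition sparse_sym (k : nat) : set 'M[R]_p :=
  [set A | A^T = A /\ (nnz A <= 2 * k + p)%N].

Definition dist (C : set 'M[R]_p) (X : 'M[R]_p) : R :=
  inf [set frob (X - A) | A in C].

Definition h_rho (S : 'M[R]_p) (rho : R) (k : nat) (Sig : 'M[R]_p) : R :=
  ln (\det Sig) + \tr (invmx Sig *m S)
  + rho / 2 * (dist (sparse_sym k) Sig) ^+ 2.

End Defs.

(* Main.v *)
Require Import Defs.
From HB Require Import structures.
From mathcomp Require Import all_boot all_order all_algebra.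
From mathcomp Require Import all_classical all_reals.
From mathcomp Require Import exp.
From mathcomp Require Import sequences.
From mathcomp Require Import ring lra perm fingroup.
Import Order.TTheory GRing.Theory Num.Theory.
Local Open Scope ring_scope.

Module P1.

Section Aux.
Variable R : realType.

Definition qf n (P : 'M[R]_n) (x y : 'cV[R]_n) : R := (x^T *m P *m y) 0 0.
Arguments qf {n}.

Lemma qfDl n (P : 'M[R]_n) x y z : qf P (x + y) z = qf P x z + qf P y z.
Proof. by rewrite /qf linearD /= !mulmxDl mxE. Qed.
Lemma qfDr n (P : 'M[R]_n) x y z : qf P z (x + y) = qf P z x + qf P z y.
Proof. by rewrite /qf mulmxDr mxE. Qed.
Lemma qfZl n (P : 'M[R]_n) a x y : qf P (a *: x) y = a * qf P x y.
Proof. by rewrite /qf linearZ /= -!scalemxAl mxE. Qed.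
Lemma qfZr n (P : 'M[R]_n) a x y : qf P x (a *: y) = a * qf P x y.
Proof. by rewrite /qf -scalemxAr mxE. Qed.
Lemma qf_sym n (P : 'M[R]_n) x y : P^T = P -> qf P x y = qf P y x.
Proof.
move=> sP; rewrite /qf.
have -> : (x^T *m P *m y) 0 0 = ((x^T *m P *m y)^T) 0 0 by rewrite [RHS]mxE.
by rewrite !trmx_mul trmxK sP mulmxA.
Qed.
Definition ev n (i : 'I_n) : 'cV[R]_n := delta_mx i 0.
Arguments ev {n}.
Lemma qf_delta n (P : 'M[R]_n) i j : qf P (ev i) (ev j) = P i j.
Proof. by rewrite /qf /ev trmx_delta -rowE -colE !mxE. Qed.

Lemma psd_ge0 n (P : 'M[R]_n) x : possemidef P -> 0 <= qf P x x.
Proof. by case=> _ /(_ x). Qed.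

Lemma psd_sym n (P : 'M[R]_n) i j : possemidef P -> P j i = P i j.
Proof. by case=> sP _; rewrite -{1}sP mxE. Qed.

Lemma mxBE m n (A B : 'M[R]_(m, n)) i j : (A - B) i j = A i j - B i j.
Proof. by rewrite !mxE. Qed.

Lemma mx11 (A B : 'M[R]_1) : (A *m B) 0 0 = A 0 0 * B 0 0.
Proof. by rewrite mxE big_ord1. Qed.

Arguments psd_ge0 {n P} x.
Arguments psd_sym {n P} i j.
Arguments qf_sym {n P} x y.

Lemma decomp_aux n (m : nat) : forall P : 'M[R]_n, possemidef P ->
  (forall i j : 'I_n, (i < n - m)%N -> P i j = 0) ->
  exists M : 'M[R]_n, P = M *m M^T /\
     forall (i k : 'I_n), (k < n - m)%N -> M i k = 0.
Proof.
elim: m => [|m IH] P hP hz.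
  exists 0; split; last by move=> i k _; rewrite mxE.
  by rewrite mul0mx; apply/matrixP => i j; rewrite mxE hz // subn0.
have [hmn|hnm] := ltnP m n; last first.
  have e1 : (n - m = 0)%N by apply/eqP; rewrite subn_eq0.
  have e2 : (n - m.+1 = 0)%N by apply/eqP; rewrite subn_eq0 (leq_trans hnm).
  case: (IH P hP) => [i j|M [HM _]]; first by rewrite e1.
  by exists M; split => // i k; rewrite e2.
have qlt : (n - m.+1 < n)%N by rewrite subnSK // leq_subr.
pose q := Ordinal qlt.
have hq : forall i : 'I_n, (i < n - m)%N = (i < n - m.+1)%N || (i == q).
  move=> i; rewrite -(subnSK hmn) ltnS leq_eqVlt orbC; congr (_ || _).
set a := P q q.
have a0 : 0 <= a by rewrite /a -qf_delta psd_ge0.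
have [aeq0|apos] := eqVneq a 0.
  have rowq : forall j, P q j = 0.
    move=> j; apply/eqP; apply/negPn/negP => bn0.
    set b := P q j.
    pose t := - (P j j + 1) / (2 * b).
    have := psd_ge0 (t *: ev q + ev j) hP.
    rewrite !(qfDl, qfDr, qfZl, qfZr) !qf_delta -/a aeq0.
    rewrite (psd_sym q j hP) -/b.
    have -> : t * (t * 0) + t * b + (t * b + P j j) = - 1.
      by rewrite /t; field.
    move=> h; lra.
  case: (IH P hP) => [i j|M [HM HMz]].
    by rewrite hq => /orP[/hz->|/eqP->].
  exists M; split => // i k hk; apply: HMz.
  by rewrite hq hk.
have apos' : 0 < a by rewrite lt_def apos a0.
set s := Num.sqrt a.
have s2 : s ^+ 2 = a by rewrite sqr_sqrtr.
have sn0 : s != 0 by rewrite sqrtr_eq0 -ltNge.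
set v := s^-1 *: col q P.
have vE : forall i, v i 0 = s^-1 * P i q by move=> i; rewrite !mxE.
have vvE : forall i j, (v *m v^T) i j = v i 0 * v j 0.
  by move=> i j; rewrite mxE big_ord1 [v^T _ _]mxE.
set P' := P - v *m v^T.
have hP' : possemidef P'.
  split.
    by rewrite /P' linearB /= trmx_mul trmxK hP.1.
  move=> x.
  have -> : (x^T *m P' *m x) 0 0 = qf P x x - (qf P x (ev q))^+2 / a.
    rewrite /P' mulmxBr mulmxBl; set U := x^T *m P *m x; set W := x^T *m (v *m v^T) *m x.
    rewrite [LHS]mxE [(- W) 0 0]mxE /U /W; congr (_ - _).
    rewrite !mulmxA -(mulmxA (x^T *m v)) mx11.
    have e1 : (x^T *m v) 0 0 = s^-1 * qf P x (ev q).
      by rewrite /v -scalemxAr mxE /qf colE mulmxA.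
    have e2 : (v^T *m x) 0 0 = (x^T *m v) 0 0.
      by rewrite -[in LHS](trmxK x) -trmx_mul mxE.
    rewrite e2 e1 -s2; field; exact: sn0.
  set b := qf P x (ev q).
  have := psd_ge0 (x - (b / a) *: ev q) hP.
  rewrite -scaleN1r !(qfDl, qfDr, qfZl, qfZr) qf_delta -/a.
  rewrite (qf_sym (ev q) x hP.1) -/b.
  suff -> : qf P x x + -1 * (b / a * b) + (-1 * (b / a * b) + -1 * (b / a * (-1 * (b / a * a)))) = qf P x x - b ^+ 2 / a by [].
  by field.
have hz' : forall i j : 'I_n, (i < n - m)%N -> P' i j = 0.
  move=> i j; rewrite hq => /orP[hi|/eqP->].
    by rewrite /P' mxBE vvE !vE (hz i j hi) (hz i q hi) !(mulr0, mul0r) subr0.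
  rewrite /P' mxBE vvE !vE (psd_sym q j hP) -/a.
  rewrite -s2; field; exact: sn0.
have [M' [HM' HM'z]] := IH P' hP' hz'.
have c0 : M' *m ev q = 0.
  apply/matrixP => i j; rewrite /ev -colE [LHS]mxE [RHS]mxE HM'z //.
  by rewrite hq eqxx orbT.
have c1 : (ev q)^T *m ev q = 1%:M.
  rewrite /ev trmx_delta mul_delta_mx.
  by apply/matrixP => i j; rewrite !ord1 !mxE.
exists (M' + v *m (ev q)^T); split.
  rewrite linearD /= trmx_mul trmxK mulmxDl !mulmxDr -HM'.
  rewrite !mulmxA c0 mul0mx addr0 -(mulmxA v (ev q)^T) -trmx_mul c0 trmx0 mulmx0 add0r.
  rewrite -(mulmxA v) c1 mulmx1.
  by rewrite /P' subrK.
move=> i k hk; rewrite mxE HM'z; last by rewrite hq hk.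
rewrite mxE big_ord1 /ev trmx_delta mxE add0r.
have : k != q by apply/eqP => kq; move: hk; rewrite kq /= ltnn.
by move=> kq; rewrite [X in _ * X]mxE eq_sym (negbTE kq) andbF mulr0.
Qed.

Lemma decomp n (P : 'M[R]_n) : possemidef P -> exists M : 'M[R]_n, P = M *m M^T.
Proof.
move=> hP; case: (@decomp_aux n n P hP) => [i j|M [HM _]]; first by rewrite subnn.
by exists M.
Qed.

End Aux.
Arguments decomp {R n P}.

End P1.
Import P1.

Module P2.

Section Aux2.
Variable R : realType.

Lemma le_sum1 (I : finType) (F : I -> R) i : (forall j, 0 <= F j) -> F i <= \sum_j F j.
Proof. by move=> h; rewrite (bigD1 i) //= lerDl sumr_ge0. Qed.
Arguments le_sum1 {I} F i.

Lemma psd_entry n (X : 'M[R]_n) i j : possemidef X -> `|X i j| <= 2 * \tr X.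
Proof.
move=> hX; have [M HM] := decomp hX.
have trE : \tr X = \sum_i0 \sum_k M i0 k ^+ 2.
  rewrite /mxtrace; apply: eq_bigr => i0 _; rewrite HM mxE.
  by apply: eq_bigr => k _; rewrite mxE expr2.
have r_le : forall i0, \sum_k M i0 k ^+ 2 <= \tr X.
  move=> i0; rewrite trE; apply: (le_sum1 (fun i1 => \sum_k M i1 k ^+ 2)) => j0.
  by apply: sumr_ge0 => k _; apply: sqr_ge0.
rewrite {1}HM mxE.
apply: (le_trans (ler_norm_sum _ _ _)).
apply: (@le_trans _ _ (\sum_k (M i k ^+ 2 + M j k ^+ 2))).
  apply: ler_sum => k _; rewrite mxE normrM.
  have := sqr_ge0 (`|M i k| - `|M j k|).
  rewrite -(real_normK (num_real (M i k))) -(real_normK (num_real (M j k))).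
  rewrite sqrrB => h.
  have := sqr_ge0 `|M i k|; have := sqr_ge0 `|M j k|.
  rewrite mulr2n in h; lra.
rewrite big_split /= mulr2n mulrDl mul1r.
by apply: lerD; apply: r_le.
Qed.

Lemma det_bound n (A : 'M[R]_n) c : (forall i j, `|A i j| <= c) ->
  `|\det A| <= #|{: {perm 'I_n}}|%:R * c ^+ n.
Proof.
move=> hA; rewrite /determinant.
apply: (le_trans (ler_norm_sum _ _ _)).
rewrite mulr_natl -sumr_const; apply: ler_sum => s _.
rewrite normrM normr_sign mul1r normr_prod.
rewrite -[X in c ^+ X](card_ord n) -prodr_const.
apply: ler_prod => i _; rewrite normr_ge0 /=; exact: hA.
Qed.

Lemma prod3_bound n (A B C : 'M[R]_n) a b c i j :
  (forall i j, `|A i j| <= a) -> (forall i j, `|B i j| <= b) ->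
  (forall i j, `|C i j| <= c) ->
  `|(A *m B *m C) i j| <= (n ^ 2)%:R * (a * b * c).
Proof.
move=> hA hB hC.
rewrite mxE; apply: (le_trans (ler_norm_sum _ _ _)).
apply: (@le_trans _ _ (\sum_(l < n) (\sum_(k < n) a * b) * c)).
  apply: ler_sum => l _; rewrite normrM mxE.
  apply: ler_pM; [exact: normr_ge0 | exact: normr_ge0 | | exact: hC].
  apply: (le_trans (ler_norm_sum _ _ _)); apply: ler_sum => k _.
  rewrite normrM; apply: ler_pM; [exact: normr_ge0 | exact: normr_ge0 | exact: hA | exact: hB].
rewrite !sumr_const card_ord.
have -> : a * b *+ n * c *+ n = (n ^ 2)%:R * (a * b * c).
  rewrite -[a * b *+ n]mulr_natl -mulr_natl natrX; ring.
exact: lexx.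
Qed.


Lemma frob_bound n (Y : 'M[R]_n) c : (forall i j, `|Y i j| <= c) -> 0 <= c ->
  frob Y <= n%:R * c.
Proof.
move=> hY c0; rewrite /frob.
have nc0 : 0 <= n%:R * c by apply: mulr_ge0.
have -> : n%:R * c = Num.sqrt ((n%:R * c) ^+ 2) by rewrite sqrtr_sqr ger0_norm.
rewrite ler_sqrt ?sqr_ge0 //.
apply: (@le_trans _ _ (\sum_(i < n) \sum_(j < n) c ^+ 2)).
  apply: ler_sum => i _; apply: ler_sum => j _.
  have := hY i j; rewrite -(real_normK (num_real (Y i j))) => h.
  have h0 := normr_ge0 (Y i j); rewrite !expr2; exact: ler_pM.
by rewrite !sumr_const card_ord -mulrnA exprMn -natrX mulr_natl mulnn.
Qed.


Lemma ex_bound n (A : 'M[R]_n) : exists c, 0 < c /\ forall i j, `|A i j| <= c.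
Proof.
exists (1 + \sum_i \sum_j `|A i j|); split.
  by apply: ltr_pwDl => //; apply: sumr_ge0 => i _; apply: sumr_ge0.
move=> i j.
have h : `|A i j| <= \sum_i \sum_j `|A i j|.
  apply: (le_trans (le_sum1 (fun j => `|A i j|) j _)) => //.
  by apply: (le_sum1 (fun i => \sum_j `|A i j|) i) => i0; apply: sumr_ge0.
by rewrite -[X in X <= _]add0r lerD ?ler01.
Qed.

Lemma growth (k : nat) : exists C, forall t : R, 0 < t -> k%:R * ln t <= t / 4 + C.
Proof.
case: k => [|k].
  by exists 0 => t t0; rewrite mul0r addr0; lra.
set K := (4 * k.+1%:R : R).
have K0 : 0 < K by rewrite /K; apply: mulr_gt0 => //; rewrite ltr0n.
exists (k.+1%:R * ln K) => t t0.
have e : ln t = ln (t / K) + ln K.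
  by rewrite -lnM ?posrE ?divr_gt0 // divfK ?gt_eqF.
have := ln_sublinear (divr_gt0 t0 K0).
rewrite e mulrDr => h.
have kp : 0 < k.+1%:R :> R by rewrite ltr0n.
have : k.+1%:R * ln (t / K) <= k.+1%:R * (t / K).
  by rewrite ler_pM2l // ltW.
have -> : k.+1%:R * (t / K) = t / 4.
  by rewrite /K; field; rewrite nat1r pnatr_eq0.
lra.
Qed.

End Aux2.
Arguments psd_entry {R n X} i j.
Arguments det_bound {R n A c}.
Arguments prod3_bound {R n A B C a b c} i j.
Arguments frob_bound {R n Y c}.
Arguments ex_bound {R n}.
Arguments growth {R}.

End P2.
Import P2.

Module P3.

Set Implicit Arguments. Unset Strict Implicit.
Section Aux3.
Variable R : realType.

Lemma posdef_psd n (A : 'M[R]_n) : posdef A -> possemidef A.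
Proof.
case=> sA hA; split => // x.
have [->|xn0] := eqVneq x 0; last by apply: ltW; apply: hA.
by rewrite trmx0 !mul0mx mxE.
Qed.

Lemma posdef_unit n (A : 'M[R]_n) : posdef A -> A \in unitmx.
Proof.
case=> sA hA; apply/negPn/negP => nu.
have k0 : kermx A != 0 by rewrite kermx_eq0 row_free_unit.
have [i hi] : exists i, row i (kermx A) != 0.
  case: (pickP (fun i => row i (kermx A) != 0)) => [i hi|h]; first by exists i.
  exfalso; move/negP: k0; apply; apply/eqP/row_matrixP => i.
  by rewrite row0; apply/eqP; move/negbT: (h i); rewrite negbK.
set u := row i (kermx A).
have uA : u *m A = 0 by apply/sub_kermxP; exact: row_sub.
have := hA u^T; rewrite trmx_eq0 => /(_ hi).
by rewrite trmxK uA mul0mx mxE ltxx.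
Qed.

Lemma psd_congr n (T N : 'M[R]_n) : possemidef T -> possemidef (N^T *m T *m N).
Proof.
case=> sT hT; split.
  by rewrite !trmx_mul trmxK sT mulmxA.
move=> x; have := hT (N *m x).
by rewrite trmx_mul !mulmxA.
Qed.

Lemma inv_psd n (A : 'M[R]_n) : posdef A -> possemidef (invmx A).
Proof.
move=> hA; have Au := posdef_unit hA.
have [sA _] := hA; have [_ hA'] := posdef_psd hA.
split; first by rewrite trmx_inv sA.
move=> x; have := hA' (invmx A *m x).
rewrite trmx_mul trmx_inv sA !mulmxA.
by rewrite -(mulmxA _ A) mulmxV // mulmx1.
Qed.

Lemma psd_det_gt0 n (X : 'M[R]_n) : possemidef X -> X \in unitmx -> 0 < \det X.
Proof.
move=> hX Xu; have [M HM] := decomp hX.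
have : \det X != 0 by rewrite -unitfE -unitmxE.
rewrite HM det_mulmx det_tr => h.
by rewrite lt_def h /= -expr2 sqr_ge0.
Qed.

Lemma cardS_gt0 n : (0 < #|{: {perm 'I_n}}|)%N.
Proof. by apply/card_gt0P; exists 1%g. Qed.

End Aux3.

End P3.
Import P3.


Theorem lemma1 (R : realType) (p : nat) (S : 'M[R]_p) (rho : R) (k : nat) :
  possemidef S -> S \in unitmx -> 0 < rho -> (k <= 'C(p, 2))%N ->
  forall M : R, exists B : R, forall Sig : 'M[R]_p,
    posdef Sig -> (B < frob Sig \/ B < frob (invmx Sig)) ->
    M < h_rho S rho k Sig.
Proof.
move=> hS Su rho0 _ M.
have [p0|ppos] := posnP p.
  by exists 0 => Sig _; subst p; rewrite /frob !big_ord0 sqrtr0 ltxx; case.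
have [N HN] := decomp hS.
have Nu : N \in unitmx by move: Su; rewrite HN unitmx_mul => /andP[].
have NTu : N^T \in unitmx by rewrite unitmx_tr.
have dS : 0 < \det S := psd_det_gt0 hS Su.
have [mu [mu0 hmu]] := ex_bound (invmx N).
have [nu [nu0 hnu]] := ex_bound N.
have [C1 hC1] := growth (R:=R) p.
have [C2 hC2] := growth (R:=R) p.-1.
set cP : R := #|{: {perm 'I_p}}|%:R.
have cP0 : 0 < cP by rewrite ltr0n cardS_gt0.
set cQ : R := #|{: {perm 'I_p.-1}}|%:R.
have cQ0 : 0 < cQ by rewrite ltr0n cardS_gt0.
set K1 : R := p%:R * ((p ^ 2)%:R * (mu * 2 * mu)).
set K2 : R := p%:R * ((p ^ 2)%:R * (nu * cQ * nu)).
have pR0 : 0 < p%:R :> R by rewrite ltr0n.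
have p2R0 : 0 < (p ^ 2)%:R :> R by rewrite ltr0n expn_gt0 ppos.
have K10 : 0 < K1 by rewrite /K1 !mulr_gt0.
have K20 : 0 < K2 by rewrite /K2 !mulr_gt0.
have key : forall Sig : 'M[R]_p, posdef Sig -> exists tau delta : R,
   [/\ 0 < tau, 0 < delta, delta <= cP * (2 * tau) ^+ p,
       ln (\det S) - ln delta + tau <= h_rho S rho k Sig &
       frob (invmx Sig) <= K1 * tau /\
       frob Sig * delta <= K2 * (2 * tau) ^+ p.-1].
  move=> Sig hSig.
  have Sigu := posdef_unit hSig.
  set T := invmx Sig.
  have hT := inv_psd hSig.
  have Tu : T \in unitmx by rewrite unitmx_inv.
  set X := N^T *m T *m N.
  have hX : possemidef X := psd_congr N hT.
  have Xu : X \in unitmx by rewrite !unitmx_mul NTu Tu Nu.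
  have dX := psd_det_gt0 hX Xu.
  set tau := \tr X.
  have ent : forall i j, `|X i j| <= 2 * tau := fun i j => psd_entry i j hX.
  have dle : \det X <= cP * (2 * tau) ^+ p.
    exact: le_trans (ler_norm _) (det_bound ent).
  have t0 : 0 < tau.
    set i0 : 'I_p := Ordinal ppos.
    have tge : 0 <= 2 * tau := le_trans (normr_ge0 _) (ent i0 i0).
    rewrite lt_def (_ : 0 <= tau); last by lra.
    rewrite andbT; apply/negP => /eqP t00.
    move: dle; rewrite t00 mulr0 expr0n (gtn_eqF ppos) mulr0; lra.
  exists tau, (\det X); split => //.
  - have eX : \det X = (\det Sig)^-1 * \det S.
      rewrite /X !det_mulmx det_tr det_inv HN det_mulmx det_tr; ring.
    have dSig0 : \det Sig != 0 by rewrite -unitfE -unitmxE.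
    have dSigE : \det Sig = \det S / \det X.
      by rewrite eX; field; rewrite dSig0 gt_eqF.
    have trE : \tr (invmx Sig *m S) = tau.
      by rewrite HN mulmxA mxtrace_mulC /tau /X mulmxA.
    rewrite /h_rho dSigE trE ln_div ?posrE //.
    have : 0 <= rho / 2 * dist (sparse_sym (R:=R) (p:=p) k) Sig ^+ 2.
      by apply: mulr_ge0; [apply: divr_ge0; [apply: ltW|] | apply: sqr_ge0].
    lra.
  split.
  - have TE : T = (invmx N)^T *m X *m invmx N.
      by rewrite /X trmx_inv -!mulmxA mulmxV // mulmx1 (mulKmx NTu).
    have hT1 : forall i j, `|T i j| <= (p ^ 2)%:R * (mu * (2 * tau) * mu).
      move=> i j; rewrite TE; apply: prod3_bound => // i1 j1.
      by rewrite mxE.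
    apply: (le_trans (frob_bound hT1 _)).
      by rewrite mulr_ge0 // !mulr_ge0 // ltW.
    by rewrite /K1 le_eqVlt; apply/orP; left; apply/eqP; ring.
  - set Z := invmx N *m Sig *m invmx N^T.
    have XZ : X *m Z = 1%:M.
      rewrite /X /Z !mulmxA (mulmxK Nu) -(mulmxA N^T) mulVmx // mulmx1.
      exact: mulmxV.
    have XiE : invmx X = Z.
      by rewrite -[invmx X]mulmx1 -XZ mulmxA mulVmx // mul1mx.
    have SigE : Sig = N *m invmx X *m N^T.
      by rewrite XiE /Z !mulmxA mulmxV // mul1mx (mulmxKV NTu).
    set beta := (\det X)^-1 * (cQ * (2 * tau) ^+ p.-1).
    have hXi : forall i j, `|invmx X i j| <= beta.
      move=> i j; rewrite /invmx Xu mxE mxE /cofactor normrM normrV ?unitfE ?gt_eqF //.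
      rewrite gtr0_norm // /beta ler_pM2l ?invr_gt0 //.
      rewrite normrM normr_sign mul1r; apply: det_bound => a b.
      rewrite [row' _ _ _ _]mxE [col' _ _ _ _]mxE; exact: ent.
    have hSig1 : forall i j, `|Sig i j| <= (p ^ 2)%:R * (nu * beta * nu).
      move=> i j; rewrite SigE; apply: prod3_bound => // i1 j1.
      by rewrite mxE.
    have b0 : 0 <= beta.
      apply: mulr_ge0; [by rewrite invr_ge0 ltW | apply: mulr_ge0; [exact: ltW | by apply/exprn_ge0/ltW; rewrite mulr_gt0]].
    have c0 : 0 <= (p ^ 2)%:R * (nu * beta * nu).
      apply: mulr_ge0; first exact: ltW.
      apply: mulr_ge0; last exact: ltW.
      by apply: mulr_ge0 => //; exact: ltW.
    have := frob_bound hSig1 c0.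
    rewrite -(ler_pM2r dX) => h; apply: (le_trans h).
    rewrite /beta /K2 le_eqVlt; apply/orP; left; apply/eqP.
    by field; rewrite gt_eqF.
set A1 := `|M - ln (\det S) + ln cP + C1| + 1.
set B1 := K1 * (2 * A1).
set A2 := `|M - ln (\det S) + ln K2 + C2|.
set B2 := expR A2.
have A10 : 0 < A1 by rewrite /A1 ltr_pwDr.
have B10 : 0 < B1 by rewrite /B1 !mulr_gt0.
have B20 : 0 < B2 := expR_gt0 _.
exists (B1 + B2) => Sig hSig hB.
have [tau [delta [t0 d0 dle hh [hT hSg]]]] := key Sig hSig.
have u0 : 0 < 2 * tau by rewrite mulr_gt0.
case: hB => hB.
- have fS0 : 0 < frob Sig by apply: lt_trans hB; rewrite addr_gt0.
  have h1 : B2 * delta < K2 * (2 * tau) ^+ p.-1.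
    apply: (lt_le_trans _ hSg); rewrite ltr_pM2r //.
    by apply: (le_lt_trans _ hB); rewrite lerDr ltW.
  have := h1; rewrite -ltr_ln ?posrE ?mulr_gt0 ?exprn_gt0 //.
  rewrite (@lnM _ B2 delta) ?posrE // (@lnM _ K2 ((2 * tau) ^+ p.-1)) ?posrE ?exprn_gt0 // lnXn // expRK.
  have := hC2 _ u0.
  have eA2 : M - ln (\det S) + ln K2 + C2 <= A2 by rewrite /A2 ler_norm.
  move=> hg hl; rewrite mulr_natl in hg; lra.
- have h1 : B1 < K1 * tau.
    by apply: (lt_le_trans _ hT); apply: (le_lt_trans _ hB); rewrite lerDl ltW.
  have h2 : 2 * A1 < tau by move: h1; rewrite /B1 ltr_pM2l.
  have h3 : ln delta <= ln cP + p%:R * ln (2 * tau).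
    rewrite mulr_natl -lnXn // -lnM ?posrE ?exprn_gt0 //.
    by rewrite ler_ln ?posrE ?mulr_gt0 ?exprn_gt0.
  have := hC1 _ u0.
  have eA1 : M - ln (\det S) + ln cP + C1 <= A1 - 1 by rewrite /A1 addrK ler_norm.
  move=> hg; lra.
Qed.
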